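(* Let $K\ge 2$, let $\Delta^K\subset\mathbb{R}^K$ be the probability simplex, and identify outcomes $Y$ with one-hot vectors in $\mathbb{R}^K$. Let $\mu_t\in\Delta^K$, $\mu_t^*\in\Delta^K$, $c_t\in\mathbb{R}_+^K$ with $\mu_t+c_t\in[0,1]^K$ and $\mu_t-c_t\in[0,1]^K$. Let $a_t$ be an action and $l_t$ a loss; write $l\in\mathbb{R}^K$ for the vector $l_i=l_t(a_t,Y=i)$. Define $$L_t^{\max}=\max_{\tilde\mu\in\Delta^K,\ \tilde\mu\in[\mu_t-c_t,\mu_t+c_t]}\mathbb{E}_{Y\sim\tilde\mu}[l_t(a_t,Y)],\qquad L_t^*=\mathbb{E}_{Y\sim\mu_t^*}[l_t(a_t,Y)],$$ (where $\tilde\mu\in[\mu_t-c_t,\mu_t+c_t]$ is coordinatewise), and for $g_t\in\mathbb{R}^K$, $$L_t^{\mathrm{pay}}=L_t^*+\mathbb{E}_{Y\sim\mu_t^*}\big[\langle g_t,\mu_t-Y\rangle+\langle|g_t|,c_t\rangle\big],$$ with $|g_t|$ taken coordinatewise. Let $\gamma^*\in\mathbb{R}$ attain $\inf_{\gamma\in\mathbb{R}}\langle c_t,|l-\gamma\mathbf{1}|\rangle$. If $g_t=l-\gamma^*\mathbf{1}$, then $L_t^{\mathrm{pay}}=L_t^{\max}$.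
   Context: $\mathbf{1}$ denotes the all-ones vector in $\mathbb{R}^K$ and $|v|$ for a vector $v$ denotes the coordinatewise absolute value. *)

(* Defs.v *)
From mathcomp Require Import all_boot all_order all_algebra.
Set Implicit Arguments. Unset Strict Implicit. Unset Printing Implicit Defensive.
Import Order.TTheory GRing.Theory Num.Theory.
Local Open Scope ring_scope.

Section Defs.
Variables (R : realFieldType) (K : nat).

Definition dotv (u v : 'I_K -> R) : R := \sum_(i < K) u i * v i.

Definition absv (v : 'I_K -> R) : 'I_K -> R := fun i => `|v i|.

Definition onehot (j : 'I_K) : 'I_K -> R := fun i => (i == j)%:R.

Definition in_simplex (m : 'I_K -> R) : Prop :=
  (forall i, 0 <= m i) /\ \sum_(i < K) m i = 1.

(* E_{Y ~ m}[f Y], Y identified with outcome index *)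
Definition expect (m : 'I_K -> R) (f : 'I_K -> R) : R := \sum_(j < K) m j * f j.

Definition feasible (mu c mt : 'I_K -> R) : Prop :=
  in_simplex mt /\ (forall i, mu i - c i <= mt i <= mu i + c i).

Definition is_Lmax (mu c l : 'I_K -> R) (v : R) : Prop :=
  (exists2 mt, feasible mu c mt & v = expect mt l) /\
  (forall mt, feasible mu c mt -> expect mt l <= v).

Definition Lstar (mustar l : 'I_K -> R) : R := expect mustar l.

Definition Lpay (mu mustar c g l : 'I_K -> R) : R :=
  Lstar mustar l +
  expect mustar (fun j => dotv g (fun i => mu i - onehot j i) + dotv (absv g) c).
End Defs.

(* Main.v *)
Require Import Defs.
From mathcomp Require Import all_boot all_order all_algebra.
From mathcomp Require Import lra ring.
Import Order.TTheory GRing.Theory Num.Theory.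
Local Open Scope ring_scope.

Lemma eps_exists (R : realFieldType) (K : nat) (d : 'I_K -> R) :
  exists2 e : R, 0 < e & forall i, d i != 0 -> e <= `|d i|.
Proof.
exists (\big[Order.min/1]_(i | d i != 0) `|d i|).
- apply/bigmin_gtP; split => // i; by rewrite normr_gt0.
- move=> i Hi; exact: bigmin_le_cond.
Qed.

Lemma absp (R : realFieldType) (x e : R) : 0 < e -> (x != 0 -> e <= `|x|) ->
  `|x - e| = `|x| + e * (if 0 < x then -1 else 1).
Proof.
move=> e0 he; case: ifPn => [hx|]; last (rewrite -leNgt => hx).
- have := he (lt0r_neq0 hx); rewrite (gtr0_norm hx) => hex.
  rewrite ger0_norm; [lra|lra].
- rewrite (ler0_norm hx) (@ler0_norm _ (x - e)); last lra. lra.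
Qed.

Lemma absm (R : realFieldType) (x e : R) : 0 < e -> (x != 0 -> e <= `|x|) ->
  `|x + e| = `|x| + e * (if x < 0 then -1 else 1).
Proof.
move=> e0 he; case: ifPn => [hx|]; last (rewrite -leNgt => hx).
- have := he (ltr0_neq0 hx); rewrite (ltr0_norm hx) => hex.
  rewrite ler0_norm; [lra|lra].
- rewrite (ger0_norm hx) (@ger0_norm _ (x + e)); last lra. lra.
Qed.

Lemma sum_shift (R : realFieldType) (K : nat) (x l : 'I_K -> R) (g : R) :
  \sum_(i < K) x i = 0 -> \sum_(i < K) x i * l i = \sum_(i < K) x i * (l i - g).
Proof.
move=> H; under [RHS]eq_bigr do rewrite mulrBr.
by rewrite sumrB -mulr_suml H mul0r subr0.
Qed.

Theorem proposition3 (R : realFieldType) (K : nat) (hK : (2 <= K)%N)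
  (mu mustar c : 'I_K -> R)
  (hmu : in_simplex mu) (hmustar : in_simplex mustar)
  (hc : forall i, 0 <= c i)
  (hplus : forall i, 0 <= mu i + c i <= 1)
  (hminus : forall i, 0 <= mu i - c i <= 1)
  (A : Type) (a : A) (loss : A -> 'I_K -> R)
  (gammastar : R)
  (hgamma : forall gamma : R,
     dotv c (absv (fun i => loss a i - gammastar)) <=
     dotv c (absv (fun i => loss a i - gamma)))
  (g : 'I_K -> R) (hg : g = (fun i => loss a i - gammastar)) :
  is_Lmax mu c (loss a) (Lpay mu mustar c g (loss a)).
Proof.
subst g; set l := loss a.
move: hgamma; rewrite /dotv /absv => hgamma.
case: hmu => hmu0 hmu1; case: hmustar => hms0 hms1.
set V := \sum_(i < K) l i * mu i + \sum_(i < K) `|l i - gammastar| * c i.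
have HL : Lpay mu mustar c (fun i => l i - gammastar) l = V.
  rewrite /Lpay /Lstar /expect /dotv /absv.
  set D := \sum_(i < K) `|l i - gammastar| * c i.
  set X := \sum_(i < K) (l i - gammastar) * mu i.
  have E1 : forall j, \sum_(i < K) (l i - gammastar) * (mu i - onehot R j i) + D
      = (X + D) - (l j - gammastar).
    move=> j; under eq_bigr do rewrite mulrBr; rewrite sumrB.
    rewrite [Y in _ - Y + _](bigD1 j) //= [Y in _ - (_ + Y) + _]big1 /onehot ?eqxx ?mulr1; first by rewrite /X; ring.
    by move=> i /negbTE ->; rewrite mulr0.
  rewrite [Y in _ + Y](eq_bigr (fun j => mustar j * (X + D) - mustar j * (l j - gammastar))); last by move=> j _; rewrite E1 mulrBr.
  rewrite sumrB -mulr_suml hms1 mul1r.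
  under [X in _ - X]eq_bigr do rewrite mulrBr.
  rewrite sumrB -mulr_suml hms1 mul1r.
  have -> : X = \sum_(i < K) l i * mu i - gammastar.
    by rewrite /X; under eq_bigr do rewrite mulrBl; rewrite sumrB -mulr_sumr hmu1 mulr1.
  rewrite /V -/D; ring.
rewrite /is_Lmax HL; split; last first.
  move=> m [[hm0 hm1] hbox]; rewrite /expect.
  suff : \sum_(j < K) m j * l j - \sum_(i < K) l i * mu i <= \sum_(i < K) `|l i - gammastar| * c i.
    rewrite /V; lra.
  have -> : \sum_(i < K) l i * mu i = \sum_(i < K) mu i * l i by apply: eq_bigr => i _; rewrite mulrC.
  rewrite -sumrB.
  under eq_bigr do rewrite -mulrBl.
  rewrite (sum_shift _ _ _ _ gammastar); last by rewrite sumrB hm1 hmu1 subrr.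
  apply: ler_sum => i _.
  apply: le_trans (ler_norm _) _; rewrite normrM mulrC.
  apply: ler_wpM2l; first exact: normr_ge0.
  by rewrite ler_distl.
have [e e0 he] := eps_exists _ _ (fun i => l i - gammastar).
set tau0 := fun i => if l i - gammastar == 0 then 0 else if 0 < l i - gammastar then 1 else -1 : R.
set Aa := \sum_(i < K) c i * tau0 i.
set Z := \sum_(i < K) c i * (l i - gammastar == 0)%:R.
have Sp : 0 <= \sum_(i < K) c i * (if 0 < l i - gammastar then -1 else 1).
  have H := hgamma (gammastar + e).
  have E : \sum_(i < K) c i * `|l i - (gammastar + e)| =
     \sum_(i < K) c i * `|l i - gammastar| + e * \sum_(i < K) c i * (if 0 < l i - gammastar then -1 else 1).
    rewrite mulr_sumr -big_split; apply: eq_bigr => i _ /=.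
    rewrite (_ : l i - (gammastar + e) = (l i - gammastar) - e); last by ring.
    rewrite absp //; last by move=> /he.
    by rewrite mulrDr mulrCA.
  rewrite E in H.
  have : 0 <= e * \sum_(i < K) c i * (if 0 < l i - gammastar then -1 else 1) by lra.
  by rewrite pmulr_rge0.
have Sm : 0 <= \sum_(i < K) c i * (if l i - gammastar < 0 then -1 else 1).
  have H := hgamma (gammastar - e).
  have E : \sum_(i < K) c i * `|l i - (gammastar - e)| =
     \sum_(i < K) c i * `|l i - gammastar| + e * \sum_(i < K) c i * (if l i - gammastar < 0 then -1 else 1).
    rewrite mulr_sumr -big_split; apply: eq_bigr => i _ /=.
    rewrite (_ : l i - (gammastar - e) = (l i - gammastar) + e); last by ring.
    rewrite absm //; last by move=> /he.
    by rewrite mulrDr mulrCA.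
  rewrite E in H.
  have : 0 <= e * \sum_(i < K) c i * (if l i - gammastar < 0 then -1 else 1) by lra.
  by rewrite pmulr_rge0.
have SpE : \sum_(i < K) c i * (if 0 < l i - gammastar then -1 else 1) = - Aa + Z.
  rewrite /Aa /Z -sumrN -big_split; apply: eq_bigr => i _ /=.
  rewrite /tau0; case: (ltrgtP (l i - gammastar) 0) => h /=; ring.
have SmE : \sum_(i < K) c i * (if l i - gammastar < 0 then -1 else 1) = Aa + Z.
  rewrite /Aa /Z -big_split; apply: eq_bigr => i _ /=.
  rewrite /tau0; case: (ltrgtP (l i - gammastar) 0) => h /=; ring.
rewrite SpE in Sp; rewrite SmE in Sm.
have Z0 : 0 <= Z by apply: sumr_ge0 => i _; apply: mulr_ge0 => //; exact: ler0n.
set s := if Z == 0 then 0 else - Aa / Z.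
have hs : -1 <= s <= 1.
  rewrite /s; case: eqP => hZ; first by lra.
  have Zp : 0 < Z by rewrite lt_def Z0 andbT; apply/eqP.
  by rewrite ler_pdivrMr // ler_pdivlMr //; lra.
have hsA : Aa + s * Z = 0.
  rewrite /s; case: eqP => hZ; first by lra.
  by rewrite divfK ?addrN //; apply/eqP.
set tau := fun i => if l i - gammastar == 0 then s else tau0 i.
have htau : forall i, -1 <= tau i <= 1.
  move=> i; rewrite /tau /tau0; case: (ltrgtP (l i - gammastar) 0) => h /=; lra.
have hsum : \sum_(i < K) c i * tau i = 0.
  transitivity (Aa + s * Z); last exact: hsA.
  rewrite /Aa /Z mulr_sumr -big_split; apply: eq_bigr => i _ /=.
  rewrite /tau /tau0; case: (ltrgtP (l i - gammastar) 0) => h /=; ring.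
exists (fun i => mu i + c i * tau i).
  split; last first.
    move=> i; have := htau i; have := hc i; move=> h1 h2.
    apply/andP; split; nra.
  split.
    move=> i; have := htau i; have := hc i; have := hminus i; move=> h0 h1 h2. nra.
  by rewrite big_split /= hmu1 hsum addr0.
rewrite /expect /V.
under [RHS]eq_bigr do rewrite mulrDl.
rewrite big_split /=; congr (_ + _).
  by apply: eq_bigr => i _; rewrite mulrC.
rewrite [RHS](sum_shift _ _ _ _ gammastar) //.
apply: eq_bigr => i _.
rewrite /tau /tau0; case: (ltrgtP (l i - gammastar) 0) => h /=.
- rewrite (ltr0_norm h); ring.
- rewrite (gtr0_norm h); ring.
- rewrite h normr0; ring.
Qed.
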